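(* Let $G$ be a graph with vertex set $V$ and let $\mu$ be any probability distribution over subsets of $V$. Let $H_\mu$ be the graph on $V$ with edge weights $H_\mu(u,v)=\Pr_{S\sim\mu}[u,v\in S]$. Then $$\mathsf{inter}_G(H_\mu)\ge\mathbb E_{S\sim\mu,\,S'\sim\mu}\left[\mathsf{inter}_G(K_{|S\cap S'|})\right],$$ where $S,S'$ are independent and $K_m$ denotes the unit-weighted complete graph on $m$ vertices.
   Context: $\mathcal P_{uv}$ is the set of paths in $G$ between $u,v$. A flow is $F:\bigcup\mathcal P_{uv}\to[0,\infty)$ with $F[u,v]=\sum_{p\in\mathcal P_{uv}}F(p)$. $\mathsf{inter}(F)=\sum_{(u,v,u',v'):|\{u,v,u',v'\}|=4}\sum_{p\in\mathcal P_{uv},p'\in\mathcal P_{u'v'}}\sum_{x\in p\cap p'}F(p)F(p')$. For a graph $H$ with edge weights $w$, an $H$-flow in $G$ is a flow $F$ with an injective $\phi:V(H)\to V$ such that $F[\phi(u),\phi(v)]\ge w(u,v)$ for every edge $\{u,v\}$ of $H$; unit-weighted means all weights are $1$. $\mathsf{inter}_G(H)$ is the minimum of $\mathsf{inter}(F)$ over $H$-flows $F$ in $G$. *)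

(* Defs.v *)
From HB Require Import structures.
From mathcomp Require Import all_boot all_order all_algebra.
From mathcomp Require Import boolp classical_sets reals constructive_ereal ereal.
Set Implicit Arguments. Unset Strict Implicit. Unset Printing Implicit Defensive.
Import Order.TTheory GRing.Theory Num.Theory.
Local Open Scope ring_scope.
Local Open Scope classical_set_scope.

Section Flows.
Variables (R : realType) (V : finType) (e : rel V).

Definition is_gpath (u v : V) (p : seq V) : bool :=
  match p with
  | [::] => false
  | x :: q => [&& x == u, last x q == v, path e x q & uniq p]
  end.

(* \sum_{p in P_uv} f p.  Simple paths have at most #|V| vertices, so each
   one occurs exactly once as a k-tuple with k <= #|V|. *)
Definition psum (u v : V) (f : seq V -> R) : R :=
  \sum_(k < #|V|.+1) \sum_(t : k.-tuple V | is_gpath u v t) f t.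

Definition fval (F : seq V -> R) (u v : V) : R := psum u v F.

(* A flow: nonnegative function on paths.  Paths are undirected objects, so
   a path and its reversal are the same path: F p = F (rev p). *)
Definition is_flow (F : seq V -> R) : Prop :=
  (forall p, 0 <= F p) /\ (forall p, F p = F (rev p)).

Definition inter (F : seq V -> R) : R :=
  \sum_(u : V) \sum_(v : V) \sum_(u' : V) \sum_(v' : V)
    (if #|[set u; v; u'; v']| == 4%N then
       psum u v (fun p => psum u' v' (fun p' =>
         \sum_(x : V | (x \in p) && (x \in p')) F p * F p'))
     else 0).

Definition is_Hflow (VH : finType) (EH : rel VH) (w : VH -> VH -> R)
    (F : seq V -> R) : Prop :=
  is_flow F /\
  exists phi : VH -> V, injective phi /\
    forall x y, EH x y -> w x y <= fval F (phi x) (phi y).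

(* inter_G(H): infimum (+oo if there is no H-flow) of inter over H-flows. *)
Definition interG (VH : finType) (EH : rel VH) (w : VH -> VH -> R) : \bar R :=
  ereal_inf [set (inter F)%:E | F in [set F | is_Hflow EH w F]].

Definition interK (m : nat) : \bar R :=
  interG (fun i j : 'I_m => i != j) (fun _ _ => 1).

Definition Hmu_w (mu : {set V} -> R) (u v : V) : R :=
  \sum_(S : {set V} | (u \in S) && (v \in S)) mu S.

Definition interHmu (mu : {set V} -> R) : \bar R :=
  interG (fun u v : V => u != v) (Hmu_w mu).

End Flows.

(* Main.v *)
Set Warnings "-all".
Require Import Defs.
From HB Require Import structures.
From mathcomp Require Import all_boot all_order all_algebra.
From mathcomp Require Import boolp classical_sets reals constructive_ereal ereal.
From mathcomp Require Import ring.
Set Implicit Arguments. Unset Strict Implicit. Unset Printing Implicit Defensive.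
Import Order.TTheory GRing.Theory Num.Theory.
Local Open Scope ring_scope.

Section Helpers.
Variables (R : realType) (V : finType) (e : rel V).

Lemma psumZ u v c (f : seq V -> R) :
  psum e u v (fun p => c * f p) = c * psum e u v f.
Proof. rewrite /psum mulr_sumr; apply: eq_bigr => k _; by rewrite mulr_sumr. Qed.

Lemma psum_ext u v (f g : seq V -> R) :
  (forall p, is_gpath e u v p -> f p = g p) -> psum e u v f = psum e u v g.
Proof. move=> H; apply: eq_bigr => k _; apply: eq_bigr => t Ht; exact: H. Qed.

Lemma psum_ge0 u v (f : seq V -> R) : (forall p, 0 <= f p) -> 0 <= psum e u v f.
Proof. move=> H; apply: sumr_ge0 => k _; apply: sumr_ge0 => t _; exact: H. Qed.

Variables (F : seq V -> R) (psi : V -> V).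

Definition mm (a b : V) : R := Num.min (fval e F a b) (fval e F b a).

Definition Gx (T : {set V}) (a b : V) : R :=
  if [&& psi a \in T, psi b \in T & a != b] then (mm a b)^-1 else 0.

Definition Gf (T : {set V}) (p : seq V) : R :=
  if p is x :: q then Gx T x (last x q) * F p else 0.

Lemma Gx_sym T a b : Gx T a b = Gx T b a.
Proof.
rewrite /Gx /mm eq_sym minC.
by case: (psi a \in T); case: (psi b \in T).
Qed.

Lemma Gf_gpath T u v p : is_gpath e u v p -> Gf T p = Gx T u v * F p.
Proof. case: p => [|x q] //= /and4P [/eqP Hx /eqP Hl _ _]; by rewrite -Hl Hx. Qed.

Lemma rev_cons' (x : V) q : exists y q', rev (x :: q) = y :: q' /\ y = last x q /\ last y q' = x.
Proof.
case/lastP: q => [|r z]; first by exists x, [::].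
exists z, (rcons (rev r) x); split; last by rewrite !last_rcons.
by rewrite rev_cons rev_rcons rcons_cons.
Qed.

Lemma Gf_rev T (Fsym : forall p, F p = F (rev p)) p : Gf T (rev p) = Gf T p.
Proof.
case: p => [|x q] //.
have [y [q' [Er [Ey Hl]]]] := rev_cons' x q.
by rewrite Er /= Hl -Ey Gx_sym -Er -Fsym.
Qed.

Definition Jt u v u' v' : R :=
  psum e u v (fun p => psum e u' v' (fun p' =>
         \sum_(x : V | (x \in p) && (x \in p')) F p * F p')).

Lemma inter_G T : inter e (Gf T) =
  \sum_(u : V) \sum_(v : V) \sum_(u' : V) \sum_(v' : V)
    (if #|([set u; v; u'; v'])%classic| == 4%N then Gx T u v * Gx T u' v' * Jt u v u' v' else 0).
Proof.
rewrite /inter; apply: eq_bigr => u _; apply: eq_bigr => v _.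
apply: eq_bigr => u' _; apply: eq_bigr => v' _.
case: ifP => // _.
transitivity (psum e u v (fun p => Gx T u v * (Gx T u' v' *
   psum e u' v' (fun p' => \sum_(x : V | (x \in p) && (x \in p')) F p * F p')))).
  apply: psum_ext => p Hp; rewrite mulrA -psumZ; apply: psum_ext => p' Hp'.
  rewrite (Gf_gpath _ Hp) (Gf_gpath _ Hp') !mulr_sumr; apply: eq_bigr => x _; ring.
rewrite psumZ -mulrA; congr (_ * _); exact: psumZ.
Qed.


Lemma pull (I J K : finType) (c : I -> J -> R) (g : I -> J -> K -> R) :
  \sum_(i : I) \sum_(j : J) c i j * \sum_(k : K) g i j k =
  \sum_(k : K) \sum_(i : I) \sum_(j : J) c i j * g i j k.
Proof.
under eq_bigr => i _ do under eq_bigr => j _ do rewrite mulr_sumr.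
under eq_bigr => i _ do rewrite exchange_big.
by rewrite exchange_big.
Qed.

Variables (mu : {set V} -> R) (phi : V -> V).
Hypotheses (mu_ge0 : forall S, 0 <= mu S) (F0 : forall p, 0 <= F p)
  (psiK : forall x, phi (psi x) = x)
  (Hw : forall x y, x != y -> Hmu_w mu x y <= fval e F (phi x) (phi y)).

Lemma fval_ge0 a b : 0 <= fval e F a b.
Proof. exact: psum_ge0. Qed.

Lemma mm_ge0 a b : 0 <= mm a b.
Proof. by rewrite /mm le_min !fval_ge0. Qed.

Lemma Hmu_sym x y : Hmu_w mu x y = Hmu_w mu y x.
Proof. by apply: eq_bigl => S; rewrite andbC. Qed.

Lemma Hmu_le_mm a b : a != b -> Hmu_w mu (psi a) (psi b) <= mm a b.
Proof.
move=> nab.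
have npsi : psi a != psi b.
  by apply: contra nab => /eqP H; apply/eqP; rewrite -(psiK a) H psiK.
rewrite /mm le_min; apply/andP; split.
  by have := Hw npsi; rewrite !psiK.
have h : psi b != psi a by rewrite eq_sym.
rewrite Hmu_sym; have := Hw h; by rewrite !psiK.
Qed.


Definition ind (S : {set V}) a b : R :=
  if [&& psi a \in S, psi b \in S & a != b] then mu S else 0.

Lemma ind_ge0 S a b : 0 <= ind S a b.
Proof. by rewrite /ind; case: ifP. Qed.

Lemma sum_ind a b : \sum_(S : {set V}) ind S a b <= mm a b.
Proof.
case: (eqVneq a b) => [->|nab].
  rewrite big1 ?mm_ge0 // => S _; by rewrite /ind eqxx !andbF.
apply: le_trans; last exact: (Hmu_le_mm nab).
rewrite /Hmu_w [X in _ <= X]big_mkcond le_eqVlt; apply/orP; left; apply/eqP.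
by apply: eq_bigr => S _; rewrite /ind nab andbT.
Qed.

Lemma fac_le1 a b : (\sum_(S : {set V}) ind S a b) * (mm a b)^-1 <= 1.
Proof.
case: (eqVneq (mm a b) 0) => [->|nz]; first by rewrite invr0 mulr0.
have mpos : 0 < mm a b by rewrite lt_def nz mm_ge0.
by rewrite ler_pdivrMr // mul1r sum_ind.
Qed.

Lemma term_le S S' u v u' v' :
  mu S * mu S' * (Gx (S :&: S') u v * Gx (S :&: S') u' v') <=
  (ind S u v * (mm u v)^-1) * (ind S' u' v' * (mm u' v')^-1).
Proof.
have h0 : 0 <= (ind S u v * (mm u v)^-1) * (ind S' u' v' * (mm u' v')^-1).
  by rewrite !mulr_ge0 ?ind_ge0 ?invr_ge0 ?mm_ge0.
rewrite /Gx; case: ifP => [/and3P [/setIP [uS uS'] /setIP [vS vS'] nuv] | _];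
  last by rewrite mul0r mulr0.
case: ifP => [/and3P [/setIP [uS2 uS2'] /setIP [vS2 vS2'] nuv'] | _];
  last by rewrite mulr0 mulr0.
rewrite /ind uS vS nuv uS2' vS2' nuv' /=.
rewrite le_eqVlt; apply/orP; left; apply/eqP; ring.
Qed.

Lemma dbl_le1 u v u' v' :
  \sum_(S : {set V}) \sum_(S' : {set V})
     mu S * mu S' * (Gx (S :&: S') u v * Gx (S :&: S') u' v') <= 1.
Proof.
apply: le_trans (_ : \sum_(S : {set V}) \sum_(S' : {set V})
  (ind S u v * (mm u v)^-1) * (ind S' u' v' * (mm u' v')^-1) <= _).
  by apply: ler_sum => S _; apply: ler_sum => S' _; apply: term_le.
have -> : \sum_(S : {set V}) \sum_(S' : {set V})
  (ind S u v * (mm u v)^-1) * (ind S' u' v' * (mm u' v')^-1) =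
  ((\sum_(S : {set V}) ind S u v) * (mm u v)^-1) *
  ((\sum_(S' : {set V}) ind S' u' v') * (mm u' v')^-1).
  rewrite !mulr_suml; apply: eq_bigr => S _; by rewrite mulr_sumr.
rewrite -(mulr1 1); apply: ler_pM; rewrite ?fac_le1 //.
  by rewrite mulr_ge0 ?invr_ge0 ?mm_ge0 ?sumr_ge0 // => S _; rewrite ind_ge0.
by rewrite mulr_ge0 ?invr_ge0 ?mm_ge0 ?sumr_ge0 // => S _; rewrite ind_ge0.
Qed.

Lemma Jt_ge0 u v u' v' : 0 <= Jt u v u' v'.
Proof.
apply: psum_ge0 => p; apply: psum_ge0 => p'.
by apply: sumr_ge0 => x _; rewrite mulr_ge0.
Qed.

Lemma main_real :
  \sum_(S : {set V}) \sum_(S' : {set V}) mu S * mu S' * inter e (Gf (S :&: S'))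
  <= inter e F.
Proof.
under eq_bigr => S _ do under eq_bigr => S' _ do rewrite inter_G.
rewrite pull; apply: ler_sum => u _.
rewrite pull; apply: ler_sum => v _.
rewrite pull; apply: ler_sum => u' _.
rewrite pull; apply: ler_sum => v' _.
case: ifP => _.
  have J0 := Jt_ge0 u v u' v'.
  apply: le_trans (_ : (\sum_(S : {set V}) \sum_(S' : {set V})
     mu S * mu S' * (Gx (S :&: S') u v * Gx (S :&: S') u' v')) * Jt u v u' v' <= _).
    rewrite mulr_suml le_eqVlt; apply/orP; left; apply/eqP.
    apply: eq_bigr => S _; rewrite mulr_suml; apply: eq_bigr => S' _; ring.
  by rewrite -[X in _ <= X]mul1r ler_wpM2r // dbl_le1.
by rewrite big1 // => S _; rewrite big1 // => S' _; rewrite mulr0.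
Qed.

Lemma Gf_ge0 T p : 0 <= Gf T p.
Proof.
case: p => [|x q] //=; rewrite mulr_ge0 //.
by rewrite /Gx; case: ifP => _ //; rewrite invr_ge0 mm_ge0.
Qed.

Lemma fval_G T a b : fval e (Gf T) a b = Gx T a b * fval e F a b.
Proof. rewrite /fval -psumZ; apply: psum_ext => p Hp; exact: Gf_gpath. Qed.

End Helpers.


Theorem lemma3p7 (R : realType) (V : finType) (e : rel V)
  (e_sym : symmetric e) (e_irr : irreflexive e)
  (mu : {set V} -> R) (mu_ge0 : forall S, 0 <= mu S)
  (mu_sum1 : \sum_(S : {set V}) mu S = 1) :
  (\sum_(S : {set V}) \sum_(S' : {set V})
      ((mu S * mu S')%:E * @interK R V e #|S :&: S'|) <= @interHmu R V e mu)%E.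
Proof.
rewrite /interHmu /interG.
apply: le_ereal_inf_tmp => _ [F /= HF <-].
case: HF => [[F0 Fsym] [phi [phi_inj Hphi]]].
set psi := invF phi_inj.
have psiK : forall x, phi (psi x) = x := f_invF phi_inj.
have phiK : forall x, psi (phi x) = x := invF_f phi_inj.
have Hw : forall x y, x != y -> Hmu_w mu x y <= fval e F (phi x) (phi y)
  := fun x y h => Hphi x y h.
apply: (@le_trans _ _ (\sum_(S : {set V}) \sum_(S' : {set V})
   ((mu S * mu S' * inter e (Gf e F psi (S :&: S')))%:E))).
  apply: lee_sum => S _; apply: lee_sum => S' _.
  case: (eqVneq (mu S * mu S') 0) => [->|nz]; first by rewrite mul0e mul0r.
  have muS : 0 < mu S.
    by rewrite lt_def mu_ge0 andbT; apply: contra nz => /eqP->; rewrite mul0r.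
  rewrite (EFinM (mu S * mu S')).
  apply: (lee_wpmul2l (x := (mu S * mu S')%:E)); first by rewrite lee_fin mulr_ge0.
  rewrite /interK /interG; apply: ereal_inf_le.
  exists (inter e (Gf e F psi (S :&: S')))%:E => //.
  exists (Gf e F psi (S :&: S')) => //.
  split; first split.
  - by move=> p; apply: Gf_ge0.
  - by move=> p; rewrite Gf_rev.
  exists (fun i => phi (enum_val i)); split.
    by move=> i j /phi_inj /enum_val_inj.
  move=> i j nij.
  have nab : phi (enum_val i) != phi (enum_val j).
    by apply: contra nij => /eqP /phi_inj /enum_val_inj ->.
  rewrite fval_G /Gx !phiK (enum_valP i) (enum_valP j) nab /=.
  have hle := Hmu_le_mm psiK Hw nab.
  rewrite !phiK in hle.
  have hS : mu S <= Hmu_w mu (enum_val i) (enum_val j).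
    have := enum_valP i; have := enum_valP j.
    rewrite !inE => /andP [jS _] /andP [iS _].
    rewrite /Hmu_w (bigD1 S) /=; last by rewrite iS jS.
    by rewrite lerDl sumr_ge0.
  have mpos : 0 < mm e F (phi (enum_val i)) (phi (enum_val j)).
    by apply: lt_le_trans muS (le_trans hS hle).
  by rewrite mulrC ler_pdivlMr // mul1r /mm ge_min lexx.
under eq_bigr => S _ do rewrite sumEFin.
rewrite sumEFin lee_fin.
have H := main_real mu_ge0 F0 psiK Hw.
clearbody psi.
exact: H.
Qed.
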